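(* Let $(\mathcal{A},\mathbf{m})$ be a multiarrangement in $\mathbb{Q}^l$ with $\mathcal{A}=\{H_1,\dots,H_n\}$, $H_i=\alpha_i^{-1}(0)$, where the $\alpha_i\in\mathbb{Z}[x_1,\dots,x_l]$ are linear forms such that no prime number divides any $\alpha_i$. Then for every sufficiently large prime $p$: $(\mathcal{A}_p,\mathbf{m})$ is free in $\mathbb{F}_p^l$ with exponents $(e_1,\dots,e_l)$ if and only if $(\mathcal{A},\mathbf{m})$ is free in $\mathbb{Q}^l$ with exponents $(e_1,\dots,e_l)$.
   Context: For a field $\mathbb{K}$ and $R=\mathbb{K}[x_1,\dots,x_l]$, a multiarrangement with hyperplanes $\beta_i^{-1}(0)$ and multiplicities $\mathbf{m}_i\in\mathbb{Z}_{\ge0}$ has $D=\{\delta=\sum_j f_j\partial_{x_j}: f_j\in R,\ \delta(\beta_i)\in\beta_i^{\mathbf{m}_i}R\ \forall i\}$; it is free with exponents $(e_1,\dots,e_l)$ if $D$ is a free $R$-module with a basis of homogeneous derivations of polynomial degrees $e_1,\dots,e_l$. Let $\pi_p$ be reduction mod $p$ on $\mathbb{Z}[x_1,\dots,x_l]$. For $p$ large, $\pi_p(\alpha_i)\ne\pi_p(\alpha_j)$ for $i\ne j$, and $(\mathcal{A}_p,\mathbf{m})$ denotes the multiarrangement in $\mathbb{F}_p^l$ with hyperplanes $\pi_p(\alpha_i)^{-1}(0)$ of multiplicities $\mathbf{m}(H_i)$. *)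

(* Defs.v *)
From HB Require Import structures.
From mathcomp Require Import all_boot all_order all_algebra.
From mathcomp Require Import mpoly.
Set Implicit Arguments. Unset Strict Implicit. Unset Printing Implicit Defensive.
Import Order.TTheory GRing.Theory.
Local Open Scope ring_scope.

Definition linform (K : fieldType) (l : nat) (c : 'I_l -> K) : {mpoly K[l]} :=
  \sum_(j < l) c j *: 'X_j.

(* A polynomial derivation delta = sum_j f_j d/dx_j is given by its
   coefficient family f : 'I_l -> {mpoly K[l]}. *)
Definition derivation (K : fieldType) (l : nat) := 'I_l -> {mpoly K[l]}.

(* delta(beta) for a linear form beta with coefficients c:
   sum_j f_j * (d beta / d x_j) = sum_j c_j f_j. *)
Definition apply_lin (K : fieldType) (l : nat) (delta : derivation K l)
  (c : 'I_l -> K) : {mpoly K[l]} :=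
  \sum_(j < l) c j *: delta j.

Definition in_D (K : fieldType) (l n : nat) (beta : 'I_n -> 'I_l -> K)
  (m : 'I_n -> nat) (delta : derivation K l) : Prop :=
  forall i : 'I_n, exists q : {mpoly K[l]},
    apply_lin delta (beta i) = q * (linform (beta i)) ^+ (m i).

Definition homog_deriv (K : fieldType) (l : nat) (d : nat)
  (delta : derivation K l) : Prop :=
  forall j : 'I_l, delta j \is ishomog1 d (@mdeg l).

Definition free_multiarr (K : fieldType) (l n : nat)
  (beta : 'I_n -> 'I_l -> K) (m : 'I_n -> nat) (e : 'I_l -> nat) : Prop :=
  exists theta : 'I_l -> derivation K l,
    (forall k, in_D beta m (theta k)) /\
    (forall k, homog_deriv (e k) (theta k)) /\
    (forall delta : derivation K l, in_D beta m delta ->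
       exists g : 'I_l -> {mpoly K[l]},
         forall j, delta j = \sum_(k < l) g k * theta k j) /\
    (forall g : 'I_l -> {mpoly K[l]},
       (forall j, \sum_(k < l) g k * theta k j = 0) -> forall k, g k = 0).

Definition red_form (K : fieldType) (l : nat) (a : 'I_l -> int) : 'I_l -> K :=
  fun j => (a j)%:~R.

(* Main.v *)
Require Import Defs.
From HB Require Import structures.
From mathcomp Require Import all_boot all_order all_algebra.
From mathcomp Require Import mpoly.
From mathcomp Require Import zify ring.
From Stdlib Require Import Classical_Prop.
Set Implicit Arguments. Unset Strict Implicit. Unset Printing Implicit Defensive.
Import Order.TTheory GRing.Theory.
Local Open Scope ring_scope.

Section Prime.
Variables (K : fieldType) (l : nat).
Local Notation P := {mpoly K[l]}.

Definition mdvd (a b : P) := exists q, b = q * a.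

Lemma mdvd_refl a : mdvd a a. Proof. by exists 1; rewrite mul1r. Qed.
Lemma mdvd_trans a b c : mdvd a b -> mdvd b c -> mdvd a c.
Proof. by move=> [q ->] [r ->]; exists (r * q); rewrite mulrA. Qed.
Lemma mdvd_mull a b c : mdvd a b -> mdvd a (c * b).
Proof. by move=> [q ->]; exists (c * q); rewrite mulrA. Qed.
Lemma mdvd_mulr a b c : mdvd a b -> mdvd a (b * c).
Proof. by move=> h; rewrite mulrC; apply: mdvd_mull. Qed.
Lemma mdvd_mul a b c d : mdvd a b -> mdvd c d -> mdvd (a * c) (b * d).
Proof. by move=> [q ->] [r ->]; exists (q * r); rewrite mulrACA. Qed.
Lemma mdvd0 a : mdvd a 0. Proof. by exists 0; rewrite mul0r. Qed.
Lemma mdvdD a b c : mdvd a b -> mdvd a c -> mdvd a (b + c).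
Proof. by move=> [q ->] [r ->]; exists (q + r); rewrite mulrDl. Qed.
Lemma mdvdN a b : mdvd a b -> mdvd a (- b).
Proof. by move=> [q ->]; exists (- q); rewrite mulNr. Qed.
Lemma mdvdB a b c : mdvd a b -> mdvd a c -> mdvd a (b - c).
Proof. by move=> h1 h2; apply: mdvdD => //; apply: mdvdN. Qed.
Lemma mdvdZ a b (k : K) : mdvd a b -> mdvd a (k *: b).
Proof. by move=> [q ->]; exists (k *: q); rewrite scalerAl. Qed.
Lemma mdvd_sum a (I : finType) (F : I -> P) : (forall i, mdvd a (F i)) -> mdvd a (\sum_i F i).
Proof.
move=> h; apply: (big_ind (fun x => mdvd a x)) => //; first exact: mdvd0.
exact: mdvdD.
Qed.
Lemma mdvd_exp a b k : mdvd a b -> mdvd (a ^+ k) (b ^+ k).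
Proof. by move=> [q ->]; exists (q ^+ k); rewrite exprMn. Qed.

Lemma hmsize (p : P) d : p != 0 -> p \is d.-homog -> msize p = d.+1.
Proof.
move=> nz hp; rewrite -(mlead_deg nz).
by rewrite (dhomog_mf hp (mlead_supp nz)).
Qed.

Lemma mul_eq_const (p q : P) (c : K) : c != 0 -> p * q = c%:MP ->
  exists2 a, a != 0 & p = a%:MP.
Proof.
move=> nzc e.
have nzp : p != 0 by apply/eqP=> p0; move: e; rewrite p0 mul0r => /esym/eqP; rewrite mpolyC_eq0 (negbTE nzc).
have nzq : q != 0 by apply/eqP=> q0; move: e; rewrite q0 mulr0 => /esym/eqP; rewrite mpolyC_eq0 (negbTE nzc).
have := msizeM nzp nzq; rewrite e msizeC nzc /= => hs.
have hp : (0 < msize p)%N by rewrite lt0n msize_poly_eq0.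
have hq : (0 < msize q)%N by rewrite lt0n msize_poly_eq0.
have h1 : msize p = 1%N.
  move: hs hp hq; move: (msize p) (msize q) => a b; lia.
by apply/msize_poly1P/eqP.
Qed.

Definition lintuple (c : 'I_l -> K) (j0 : 'I_l) : l.-tuple P :=
  [tuple 'X_k - (if k == j0 then (c j0)^-1 *: linform c else 0) | k < l].

Lemma linform_coef (c : 'I_l -> K) j : (linform c)@_U_(j) = c j.
Proof.
rewrite /linform raddf_sum /= (bigD1 j) //= big1 ?addr0.
  by rewrite mcoeffZ mcoeffXU eqxx mulr1.
by move=> k kj; rewrite mcoeffZ mcoeffXU (negbTE kj) mulr0.
Qed.

Lemma linform_homog (c : 'I_l -> K) : linform c \is 1.-homog.
Proof.
rewrite /linform; apply: rpred_sum => k _; apply: dhomogZ.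
by rewrite dhomogX; apply/eqP; apply: mdeg1.
Qed.

Lemma linform_neq0 (c : 'I_l -> K) j : c j != 0 -> linform c != 0.
Proof. by move=> nz; apply/eqP=> e; move: nz; rewrite -linform_coef e mcoeff0 eqxx. Qed.

Lemma linform_msize (c : 'I_l -> K) j : c j != 0 -> msize (linform c) = 2.
Proof. by move=> nz; apply: hmsize (linform_neq0 nz) (linform_homog c). Qed.

Lemma not_mdvd1 (c : 'I_l -> K) j : c j != 0 -> ~ mdvd (linform c) 1.
Proof.
move=> nz [q e]; have [a _ ea] := mul_eq_const (oner_neq0 K) (esym (etrans e (mulrC _ _))).
by move: (linform_msize nz); rewrite ea msizeC; case: (a != 0).
Qed.

Lemma lin_dvd_lin (c c' : 'I_l -> K) j0 j1 : c j0 != 0 -> c' j1 != 0 ->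
  mdvd (linform c) (linform c') -> exists a, forall j, c' j = a * c j.
Proof.
move=> nz nz' [q e].
have nzq : q != 0 by apply/eqP=> q0; move: (linform_neq0 nz'); rewrite e q0 mul0r eqxx.
have := msizeM nzq (linform_neq0 nz); rewrite -e (linform_msize nz) (linform_msize nz').
rewrite addn2 /= => /eqP; rewrite eqSS => /eqP h.
have [a _ ea] : exists2 a, a != 0 & q = a%:MP by apply/msize_poly1P/eqP.
exists a => j; rewrite -linform_coef e ea mul_mpolyC mcoeffZ linform_coef //.
Qed.

Section Subst.
Variables (c : 'I_l -> K) (j0 : 'I_l).
Hypothesis nz : c j0 != 0.
Local Notation L := (linform c).
Local Notation phi := (comp_mpoly (lintuple c j0)).

Lemma phiX k : phi 'X_k = 'X_k - (if k == j0 then (c j0)^-1 *: L else 0).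
Proof. by rewrite comp_mpolyXU -tnth_nth tnth_mktuple. Qed.

Lemma phiL : phi L = 0.
Proof.
rewrite /linform raddf_sum /=.
under eq_bigr => k _ do rewrite comp_mpolyZ phiX scalerBr.
rewrite sumrB.
have -> : \sum_(k < l) c k *: (if k == j0 then (c j0)^-1 *: L else 0) = L.
  rewrite (bigD1 j0) //= eqxx big1 ?addr0; last by move=> k /negbTE ->; rewrite scaler0.
  by rewrite scalerA mulfV // scale1r.
by rewrite subrr.
Qed.

Lemma phi_cong f : mdvd L (f - phi f).
Proof.
elim/mpolyind: f => [|a m p _ _ ih]; first by rewrite raddf0 subr0; apply: mdvd0.
rewrite raddfD /= comp_mpolyZ opprD addrACA -scalerBr; apply: mdvdD => //.
apply: mdvdZ; rewrite comp_mpolyX {1}mpolyXE_id.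
pose cg (x y : P) := mdvd L (x - y).
suff : cg (\prod_(i < l) 'X_i ^+ m i) (\prod_(i < l) tnth (lintuple c j0) i ^+ m i) by [].
apply: (big_ind2 cg); first by rewrite /cg subrr; apply: mdvd0.
  move=> x1 y1 x2 y2 h1 h2; rewrite /cg.
  have -> : x1 * x2 - y1 * y2 = x1 * (x2 - y2) + (x1 - y1) * y2.
    by rewrite mulrBr mulrBl addrA subrK.
  by apply: mdvdD; [apply: mdvd_mull | apply: mdvd_mulr].
move=> i _; rewrite /cg tnth_mktuple.
elim: (m i) => [|k ihk]; first by rewrite !expr0 subrr; apply: mdvd0.
rewrite !exprS.
have -> : forall x1 y1 x2 y2 : P, x1 * x2 - y1 * y2 = x1 * (x2 - y2) + (x1 - y1) * y2.
  by move=> x1 y1 x2 y2; rewrite mulrBr mulrBl addrA subrK.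
apply: mdvdD; first by apply: mdvd_mull.
apply: mdvd_mulr; rewrite opprB addrC subrK.
case: eqP => _; last exact: mdvd0.
by apply: mdvdZ; apply: mdvd_refl.
Qed.

Lemma mdvd_phi f : mdvd L f <-> phi f = 0.
Proof.
split; first by move=> [q ->]; rewrite rmorphM /= phiL mulr0.
by move=> h; have := phi_cong f; rewrite h subr0.
Qed.

Lemma lin_prime f g : mdvd L (f * g) -> mdvd L f \/ mdvd L g.
Proof.
move/mdvd_phi; rewrite rmorphM /= => /eqP; rewrite mulf_eq0 => /orP[] /eqP h.
  by left; apply/mdvd_phi.
by right; apply/mdvd_phi.
Qed.

End Subst.

Lemma cancelL (a b c : P) : a != 0 -> a * b = a * c -> b = c.
Proof. by move=> nz; apply: mulfI. Qed.

End Prime.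


Section Arr.
Variables (K : fieldType) (l n : nat) (beta : 'I_n -> 'I_l -> K) (m : 'I_n -> nat).
Hypothesis Hnz : forall i, exists j, beta i j != 0.
Hypothesis Hdist : forall i i', i != i' -> ~ exists c, forall j, beta i j = c * beta i' j.
Local Notation P := {mpoly K[l]}.
Local Notation L i := (linform (beta i)).

Lemma L_prime i f g : mdvd (L i) (f * g) -> mdvd (L i) f \/ mdvd (L i) g.
Proof. by move=> h; have [j nz] := Hnz i; exact: (lin_prime nz h). Qed.

Lemma L_neq0 i : L i != 0.
Proof. by have [j nz] := Hnz i; apply: linform_neq0 nz. Qed.

Lemma L_not_dvd1 i : ~ mdvd (L i) 1.
Proof. by have [j nz] := Hnz i; apply: not_mdvd1 nz. Qed.

Lemma L_dvd_L t i : mdvd (L t) (L i) -> t = i.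
Proof.
move=> h; apply/eqP; apply: contraT => ti.
have [j nz] := Hnz t; have [j' nz'] := Hnz i.
have [a ea] := lin_dvd_lin nz nz' h.
have ne : i != t by rewrite eq_sym.
by case: (Hdist ne (ex_intro _ a ea)).
Qed.

Lemma L_dvd_pow t i k : mdvd (L t) (L i ^+ k) -> t = i.
Proof.
elim: k => [|k ih]; first by rewrite expr0 => /L_not_dvd1.
by rewrite exprS => /L_prime [/L_dvd_L|/ih].
Qed.

Lemma L_dvd_prod t (s : seq 'I_n) (k : 'I_n -> nat) :
  mdvd (L t) (\prod_(i <- s) L i ^+ k i) -> t \in s.
Proof.
elim: s => [|a s ih]; first by rewrite big_nil => /L_not_dvd1.
rewrite big_cons inE => /L_prime [/L_dvd_pow ->|/ih ->]; first by rewrite eqxx.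
by rewrite orbT.
Qed.

Lemma pow_cancel t A h k : ~ mdvd (L t) A -> mdvd (L t ^+ k) (A * h) -> mdvd (L t ^+ k) h.
Proof.
move=> nA; elim: k h => [|k ih] h; first by rewrite expr0 => _; exists h; rewrite mulr1.
move=> hk.
have : mdvd (L t) (A * h).
  by apply: mdvd_trans hk; exists (L t ^+ k); rewrite exprSr.
case/L_prime => [/nA []|[h' eh]].
have : mdvd (L t ^+ k) (A * h').
  move: hk => [q]; rewrite eh exprSr mulrA mulrA => /mulIf.
  by move=> /(_ (L_neq0 t)) ->; exists q.
by move=> /ih [q eq]; exists q; rewrite eh eq exprSr mulrA.
Qed.

Lemma prod_dvd (s : seq 'I_n) f : uniq s ->
  (forall i, i \in s -> mdvd (L i ^+ m i) f) -> mdvd (\prod_(i <- s) L i ^+ m i) f.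
Proof.
elim: s f => [|a s ih] f; first by move=> _ _; rewrite big_nil; exists f; rewrite mulr1.
rewrite /= => /andP [nas us] h.
have [g eg] := ih f us (fun i hi => h i (@mem_behead _ (a :: s) _ hi)).
have ha := h a (mem_head _ _); rewrite eg in ha.
have nd : ~ mdvd (L a) (\prod_(i <- s) L i ^+ m i).
  by move/L_dvd_prod => ha'; rewrite ha' in nas.
rewrite mulrC in ha; have [q eq] := pow_cancel nd ha.
by exists q; rewrite eg eq big_cons mulrA.
Qed.

Definition Qp : P := \prod_(i < n) L i ^+ m i.
Definition Qi i : P := \prod_(j < n | j != i) L j ^+ m j.

Lemma Q_dvd f : (forall i, mdvd (L i ^+ m i) f) -> mdvd Qp f.
Proof. by move=> h; apply: prod_dvd => //; apply: index_enum_uniq. Qed.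

Lemma Q_neq0 : Qp != 0.
Proof. by apply/prodf_neq0 => i _; apply: expf_neq0; apply: L_neq0. Qed.

Lemma Q_split i : Qp = L i ^+ m i * Qi i.
Proof. by rewrite /Qp (bigD1 i). Qed.

Lemma Qi_dvd i t : t != i -> mdvd (L t ^+ m t) (Qi i).
Proof. by move=> ti; rewrite /Qi (bigD1 t) //=; apply: mdvd_mulr; apply: mdvd_refl. Qed.

Lemma Qi_neq0 i : Qi i != 0.
Proof. by apply/prodf_neq0 => j _; apply: expf_neq0; apply: L_neq0. Qed.

Lemma Q_homog : Qp \is (\sum_(i < n) m i)%N.-homog.
Proof.
rewrite /Qp; elim: (index_enum _) => [|a s ih]; first by rewrite !big_nil dhomog1.
rewrite !big_cons; apply: dhomogM => //.
by have := dhomogMn (m a) (linform_homog (beta a)); rewrite mul1n.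
Qed.

Definition dmat (th : 'I_l -> derivation K l) : 'M[P]_l := \matrix_(k, j) th k j.

Lemma apply_linE (d : derivation K l) (c : 'I_l -> K) :
  apply_lin d c = \sum_j d j * (c j)%:MP.
Proof. by apply: eq_bigr => j _; rewrite mulrC mul_mpolyC. Qed.

Lemma det_dvd_i th i : (forall k, in_D beta m (th k)) -> mdvd (L i ^+ m i) (\det (dmat th)).
Proof.
move=> hD; have [j0 nz] := Hnz i.
have [q hq] := fin_all_exists (fun k => hD k i).
set M := dmat th; pose w : 'cV[P]_l := \col_j (beta i j)%:MP.
have e1 : forall k, (M *m w) k 0 = q k * L i ^+ m i.
  by move=> k; rewrite mxE -hq apply_linE; apply: eq_bigr => j _; rewrite !mxE.
have e2 := congr1 (fun X => (X *m w) j0 0) (mul_adj_mx M).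
move: e2; rewrite /= -mulmxA mul_scalar_mx !mxE => e2.
have : mdvd (L i ^+ m i) (\det M * (beta i j0)%:MP).
  rewrite -e2; apply: mdvd_sum => k; rewrite e1 mulrA; apply: mdvd_mull; apply: mdvd_refl.
move=> [r er]; exists ((beta i j0)^-1 *: r).
by rewrite -scalerAl -er -mul_mpolyC mulrCA -mpolyCM mulVf // mulr1.
Qed.

Lemma det_dvd th : (forall k, in_D beta m (th k)) -> mdvd Qp (\det (dmat th)).
Proof. by move=> hD; apply: Q_dvd => i; apply: det_dvd_i. Qed.

End Arr.


Section Saito.
Variables (K : fieldType) (l n : nat) (beta : 'I_n -> 'I_l -> K) (m : 'I_n -> nat).
Hypothesis Hnz : forall i, exists j, beta i j != 0.
Hypothesis Hdist : forall i i', i != i' -> ~ exists c, forall j, beta i j = c * beta i' j.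
Local Notation P := {mpoly K[l]}.
Local Notation L i := (linform (beta i)).
Local Notation Q := (Qp beta m).

Definition gen_prop (th : 'I_l -> derivation K l) :=
  forall delta : derivation K l, in_D beta m delta ->
    exists g : 'I_l -> P, forall j, delta j = \sum_(k < l) g k * th k j.
Definition indep_prop (th : 'I_l -> derivation K l) :=
  forall g : 'I_l -> P, (forall j, \sum_(k < l) g k * th k j = 0) -> forall k, g k = 0.

Lemma dmatE (th : 'I_l -> derivation K l) k j : dmat th k j = th k j.
Proof. by rewrite mxE. Qed.

Lemma cofactor_replace (A B : 'M[P]_l) k j :
  (forall a b, a != k -> A a b = B a b) -> cofactor A k j = cofactor B k j.
Proof.
move=> h; rewrite /cofactor; congr (_ * \det _); apply/matrixP => a b; rewrite !mxE.
by apply: h; rewrite eq_sym neq_lift.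
Qed.

Lemma saito_if th c : (forall k, in_D beta m (th k)) -> c != 0 ->
  \det (dmat th) = c *: Q -> gen_prop th /\ indep_prop th.
Proof.
move=> hD nzc hdet; set M := dmat th.
have nzM : \det M != 0 by rewrite hdet scaler_eq0 negb_or nzc Q_neq0.
split.
  move=> delta hd.
  pose thk k := fun k' => if k' == k then delta else th k'.
  have hk : forall k, mdvd Q (\det (dmat (thk k))).
    move=> k; apply: det_dvd => // k'; rewrite /thk; case: eqP => _ //.
  have [h eh] := fin_all_exists hk.
  have edet : forall k, \det (dmat (thk k)) = \sum_j delta j * cofactor M k j.
    move=> k; rewrite (expand_det_row _ k); apply: eq_bigr => j _.
    have -> : cofactor (dmat (thk k)) k j = cofactor M k j.
      by apply: cofactor_replace => a b ak; rewrite !dmatE /thk (negbTE ak).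
    by rewrite dmatE /thk eqxx.
  exists (fun k => c^-1 *: h k) => j.
  have key : \sum_k \det (dmat (thk k)) * th k j = delta j * \det M.
    under eq_bigr => k _ do rewrite edet mulr_suml.
    rewrite exchange_big /=.
    under eq_bigr => j' _ do under eq_bigr => k _ do rewrite -mulrA.
    under eq_bigr => j' _ do rewrite -mulr_sumr.
    have ea : forall j', \sum_k cofactor M k j' * th k j = (\adj M *m M) j' j.
      by move=> j'; rewrite mxE; apply: eq_bigr => k _; rewrite dmatE mxE.
    under eq_bigr => j' _ do rewrite ea mul_adj_mx mxE.
    rewrite (bigD1 j) //= eqxx mulr1n big1 ?addr0 // => j' /negbTE nj.
    by rewrite nj mulr0n mulr0.
  have e2 : Q * (\sum_k h k * th k j) = Q * (c *: delta j).
    rewrite mulr_sumr; under eq_bigr => k _ do rewrite mulrA (mulrC Q) -eh.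
    by rewrite key hdet -!scalerAr mulrC.
  have nzQ : Q != 0 by apply: Q_neq0.
  have e3 := mulfI nzQ e2.
  under eq_bigr => k _ do rewrite -scalerAl.
  by rewrite -scaler_sumr e3 scalerA mulVf // scale1r.
move=> g hg k.
pose G : 'rV[P]_l := \row_k g k.
have GM : G *m M = 0.
  apply/matrixP => a j; rewrite !mxE; transitivity (\sum_k g k * th k j); last exact: hg j.
  by apply: eq_bigr => k' _; rewrite dmatE mxE.
have := congr1 (fun X => (X *m \adj M) 0 k) GM.
rewrite -mulmxA mul_mx_adj mul0mx mul_mx_scalar mxE [G 0 k]mxE mxE => /eqP.
by rewrite mulf_eq0 (negbTE nzM) /= => /eqP.
Qed.

End Saito.


Lemma detU (K : fieldType) (l : nat) (c : 'I_l -> K) (j0 : 'I_l) :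
  \det (\matrix_(j, k) (if j == j0 then (if k == j0 then 1 else - c k / c j0)
                        else (j == k)%:R) : 'M[K]_l) = 1.
Proof.
rewrite (expand_det_col _ j0) (bigD1 j0) //= big1 ?addr0; last first.
  by move=> j nj; rewrite mxE (negbTE nj) mul0r.
rewrite mxE !eqxx mul1r /cofactor addnn -signr_odd odd_double expr0 mul1r.
have -> : row' j0 (col' j0 (\matrix_(j, k) (if j == j0 then (if k == j0 then 1 else - c k / c j0)
                        else (j == k)%:R) : 'M[K]_l)) = 1%:M.
  apply/matrixP => a b; rewrite !mxE eq_sym (negbTE (neq_lift j0 a)).
  by rewrite (inj_eq (lift_inj (h:=j0))).
exact: det1.
Qed.

Section OnlyIf.
Variables (K : fieldType) (l n : nat) (beta : 'I_n -> 'I_l -> K) (m : 'I_n -> nat).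
Hypothesis Hnz : forall i, exists j, beta i j != 0.
Hypothesis Hdist : forall i i', i != i' -> ~ exists c, forall j, beta i j = c * beta i' j.
Local Notation P := {mpoly K[l]}.
Local Notation L i := (linform (beta i)).
Local Notation Q := (Qp beta m).

Lemma gen_mat th (dl : 'I_l -> derivation K l) : gen_prop beta m th ->
  (forall k, in_D beta m (dl k)) -> exists G : 'M[P]_l, dmat dl = G *m dmat th.
Proof.
move=> hg hd; have [g eg] := fin_all_exists (fun k => hg _ (hd k)).
exists (\matrix_(k, k') g k k'); apply/matrixP => k j; rewrite dmatE eg mxE.
by apply: eq_bigr => k' _; rewrite mxE dmatE.
Qed.

Lemma L_dvd_prod1 t (s : seq 'I_n) : mdvd (L t) (\prod_(i <- s) L i) -> t \in s.
Proof.
move=> h; apply: (L_dvd_prod Hnz Hdist (k := fun _ => 1%N)).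
by under eq_bigr => i _ do rewrite expr1.
Qed.

Lemma div_prod h g (s : seq 'I_n) : h * g = \prod_(i <- s) L i ->
  (exists2 a, a != 0 & h = a%:MP) \/ exists2 i, i \in s & mdvd (L i) h.
Proof.
elim: s g => [|a s ih] g.
  by rewrite big_nil => e; left; apply: (mul_eq_const (oner_neq0 K) e).
rewrite big_cons => e.
have : mdvd (L a) (h * g) by rewrite e; apply: mdvd_mulr; apply: mdvd_refl.
case/(L_prime Hnz) => [ha|[g' eg]]; first by right; exists a => //; rewrite mem_head.
move: e; rewrite eg mulrA (mulrC (L a)) => /(mulIf (L_neq0 Hnz a)) /ih.
by case=> [hc|[i ins hi]]; [left | right; exists i => //; rewrite inE ins orbT].
Qed.

Definition lprod_avoid (i : 'I_n) (x : P) :=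
  exists s : seq 'I_n, all (fun y => y != i) s /\ x = \prod_(y <- s) L y.

Lemma lprod_avoid1 i : lprod_avoid i 1.
Proof. by exists [::]; rewrite big_nil. Qed.

Lemma lprod_avoidM i x y : lprod_avoid i x -> lprod_avoid i y -> lprod_avoid i (x * y).
Proof.
move=> [s [hs ->]] [t [ht ->]]; exists (s ++ t); rewrite all_cat hs ht big_cat; split => //.
Qed.

Lemma lprod_avoidX i x k : lprod_avoid i x -> lprod_avoid i (x ^+ k).
Proof.
move=> hx; elim: k => [|k ih]; first by rewrite expr0; apply: lprod_avoid1.
by rewrite exprS; apply: lprod_avoidM.
Qed.

Lemma lprod_avoid_prod i (I : finType) (p : pred I) (F : I -> P) :
  (forall x, p x -> lprod_avoid i (F x)) -> lprod_avoid i (\prod_(x | p x) F x).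
Proof.
move=> h; apply: (big_ind (lprod_avoid i)) => //; first exact: lprod_avoid1.
exact: lprod_avoidM.
Qed.

Lemma Qi_avoid i : lprod_avoid i (Qi beta m i).
Proof.
apply: lprod_avoid_prod => j ji; apply: lprod_avoidX.
by exists [:: j]; rewrite big_seq1 /= ji.
Qed.

Lemma family_bound th h i : (forall k, in_D beta m (th k)) -> gen_prop beta m th ->
  \det (dmat th) = h * Q ->
  exists s, all (fun x => x != i) s /\ exists g, h * g = \prod_(x <- s) L x.
Proof.
move=> hD hg eh; have [j0 nz] := Hnz i.
pose U : 'M[K]_l := \matrix_(j, k) (if j == j0 then (if k == j0 then 1 else - beta i k / beta i j0)
                        else (j == k)%:R).
pose s k : P := if k == j0 then Q else Qi beta m i.
pose dl (k : 'I_l) : derivation K l := fun j => s k * (U j k)%:MP.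
have hdl : forall k, in_D beta m (dl k).
  move=> k t.
  have e1 : apply_lin (dl k) (beta t) = s k * (\sum_j beta t j * U j k)%:MP.
    rewrite /apply_lin rmorph_sum mulr_sumr; apply: eq_bigr => j _.
    by rewrite /dl scalerAr rmorphM /= mul_mpolyC.
  rewrite e1 /s; case: eqP => [_|/eqP kj0].
    have [q eq] : mdvd (L t ^+ m t) Q by rewrite (Q_split beta m t); apply: mdvd_mulr; apply: mdvd_refl.
    by exists (q * (\sum_j beta t j * U j k)%:MP); rewrite eq mulrAC.
  case: (eqVneq t i) => [->|ti].
    have -> : \sum_j beta i j * U j k = 0.
      rewrite (bigD1 j0) //= (bigD1 k) //=.
      rewrite big1 ?addr0; last first.
        by move=> j /andP [/negbTE nj /negbTE njk]; rewrite mxE nj njk mulr0.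
      rewrite !mxE !eqxx (negbTE kj0) /=; field.
      exact: nz.
    by exists 0; rewrite mul0r mpolyC0 mulr0.
  have [q eq] := Qi_dvd beta m ti.
  by exists (q * (\sum_j beta t j * U j k)%:MP); rewrite eq mulrAC.
have [G eG] := gen_mat hg hdl.
have edl : dmat dl = diag_mx (\row_k s k) *m (map_mx (@mpolyC l K) U)^T.
  by apply/matrixP => k j; rewrite mul_diag_mx dmatE !mxE /dl mxE.
have := congr1 determinant eG; rewrite det_mulmx edl det_mulmx det_diag det_tr.
rewrite det_map_mx detU rmorph1 mulr1 eh (bigD1 j0) //=.
under eq_bigr => k /negbTE kj do rewrite mxE /s kj.
have nzQ : Q != 0 by apply: Q_neq0.
rewrite mxE /s eqxx mulrCA (mulrC Q) mulrA => /(mulIf nzQ) e.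
have [sx [asx ex]] : lprod_avoid i (\prod_(k < l | k != j0) Qi beta m i).
  by apply: lprod_avoid_prod => x _; apply: Qi_avoid.
by exists sx; split => //; exists (\det G); rewrite -ex e.
Qed.

Lemma saito_onlyif th : (forall k, in_D beta m (th k)) -> gen_prop beta m th ->
  exists2 c, c != 0 & \det (dmat th) = c *: Q.
Proof.
move=> hD hg; have [h eh] := det_dvd Hnz Hdist hD.
suff [a nza ea] : exists2 a, a != 0 & h = a%:MP by exists a => //; rewrite eh ea mul_mpolyC.
case: (posnP n) => [n0|n0].
  have Q1 : Q = 1 by rewrite /Qp big1 // => i; have := ltn_ord i; lia.
  pose dl (k : 'I_l) : derivation K l := fun j => (k == j)%:R.
  have hdl : forall k, in_D beta m (dl k) by move=> k t; have := ltn_ord t; lia.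
  have [G eG] := gen_mat hg hdl.
  have e1 : dmat dl = 1%:M by apply/matrixP => k j; rewrite dmatE !mxE /dl.
  have := congr1 determinant eG; rewrite det_mulmx eh Q1 mulr1 e1 det1 => e'.
  have e2 : h * \det G = 1%:MP by rewrite mpolyC1 mulrC e'.
  by apply: (mul_eq_const (oner_neq0 K) e2).
have [s0 [as0 [g0 e0]]] := family_bound (Ordinal n0) hD hg eh.
case: (div_prod e0) => // -[x xs hx].
have [s1 [as1 [g1 e1]]] := family_bound x hD hg eh.
have : mdvd (L x) (\prod_(y <- s1) L y) by rewrite -e1; apply: mdvd_mulr.
move/L_dvd_prod1 => xs1.
by move/allP: as1 => /(_ x xs1); rewrite eqxx.
Qed.

End OnlyIf.


Section Homog.
Variables (K : fieldType) (l : nat).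
Local Notation P := {mpoly K[l]}.

Lemma prod_homog (r : seq 'I_l) (F : 'I_l -> P) (e : 'I_l -> nat) :
  (forall i, F i \is (e i).-homog) -> \prod_(i <- r) F i \is (\sum_(i <- r) e i)%N.-homog.
Proof.
move=> h; elim: r => [|a r ih]; first by rewrite !big_nil dhomog1.
by rewrite !big_cons; apply: dhomogM.
Qed.

Lemma det_homog (th : 'I_l -> derivation K l) (e : 'I_l -> nat) :
  (forall k, homog_deriv (e k) (th k)) -> \det (dmat th) \is (\sum_k e k)%N.-homog.
Proof.
move=> h; rewrite /determinant; apply: rpred_sum => s _; rewrite rpredMsign.
by apply: prod_homog => i; rewrite dmatE; apply: h.
Qed.

End Homog.

Section HomogQ.
Variables (K : fieldType) (l n : nat) (beta : 'I_n -> 'I_l -> K) (m : 'I_n -> nat).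
Hypothesis Hnz : forall i, exists j, beta i j != 0.
Local Notation P := {mpoly K[l]}.
Local Notation Q := (Qp beta m).

Lemma homog_eqQ (D : P) : D != 0 -> D \is (\sum_i m i)%N.-homog -> mdvd Q D ->
  exists2 c, c != 0 & D = c *: Q.
Proof.
move=> nzD hD [h eh].
have nzQ : Q != 0 by apply: Q_neq0.
have nzh : h != 0 by apply/eqP=> h0; move: nzD; rewrite eh h0 mul0r eqxx.
have := msizeM nzh nzQ; rewrite -eh (hmsize nzD hD) (hmsize nzQ (Q_homog beta m)).
move=> e.
have hs : (0 < msize h)%N by rewrite lt0n msize_poly_eq0.
have h1 : msize h = 1%N by move: e hs; move: (msize h) (\sum_i m i)%N => a b; lia.
have [c nzc ec] : exists2 c, c != 0 & h = c%:MP by apply/msize_poly1P/eqP.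
by exists c => //; rewrite eh ec mul_mpolyC.
Qed.

Lemma deg_eqQ (D : P) (c : K) d : c != 0 -> D = c *: Q -> D \is d.-homog -> d = (\sum_i m i)%N.
Proof.
move=> nzc eD hD; have nzQ : Q != 0 by apply: Q_neq0.
have nzD : D != 0 by rewrite eD scaler_eq0 negb_or nzc nzQ.
apply: (dhomog_uniq nzD hD); rewrite eD; apply: dhomogZ; exact: Q_homog.
Qed.

End HomogQ.


Module LinAlgZ.
Import Num.Theory.
Lemma int_Fp_eq0 (p : nat) (z : int) : prime p -> ((z%:~R : 'F_p) == 0) = (p %| z)%Z.
Proof. by move=> pp; rewrite (dvdz_pcharf (pchar_Fp pp)). Qed.


Lemma int_Fp_neq0 (p : nat) (z : int) : prime p -> z != 0 -> (`|z| < p)%N -> (z%:~R : 'F_p) != 0.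
Proof.
move=> pp nz lt; rewrite int_Fp_eq0 //; apply/negP.
rewrite dvdzE /= => /dvdn_leq; rewrite absz_gt0 nz => /(_ isT); lia.
Qed.


Lemma Fp_natr (p : nat) (x : 'F_p) : prime p -> ((x : nat)%:R : 'F_p) = x.
Proof.
move=> pp; apply: val_inj; rewrite /= val_Fp_nat // modn_small //.
by move: (ltn_ord x); move: (nat_of_ord x) => k; rewrite Fp_cast.
Qed.

Lemma clear_den (T : finType) (v : T -> rat) :
  exists2 dd : int, dd != 0 & exists w : T -> int, forall t, (w t)%:~R = dd%:~R * v t.
Proof.
exists (\prod_t denq (v t)); first by apply/prodf_neq0 => t _; apply: denq_neq0.
exists (fun t => numq (v t) * \prod_(t' | t' != t) denq (v t')) => t.
rewrite [in RHS](bigD1 t) //= !intrM numqE; ring.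
Qed.

Lemma mxsub_rank (F : fieldType) (N M k : nat) (f : 'I_k -> 'I_N) (g : 'I_k -> 'I_M)
  (A : 'M[F]_(N, M)) : (\rank (mxsub f g A) <= \rank A)%N.
Proof.
rewrite -[A]mul1mx mxsub_mul; apply: leq_trans (mxrankM_maxr _ _) _.
rewrite mul1mx -mxrank_tr trmx_mxsub -(mxrank_tr A).
by apply: mxrankS; apply: rowsub_sub.
Qed.

Lemma minor_exists (N M : nat) (A : 'M[int]_(N, M)) :
  exists (f : 'I_(\rank (map_mx (intr : int -> rat) A)) -> 'I_N)
         (g : 'I_(\rank (map_mx (intr : int -> rat) A)) -> 'I_M),
    \det (mxsub f g A) != 0.
Proof.
set AQ := map_mx (intr : int -> rat) A; set r := \rank AQ.
set f := maxrankfun AQ.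
have fr : row_free (rowsub f AQ) := maxrowsub_free AQ.
have rf : row_full (rowsub f AQ)^T.
  by rewrite /row_full mxrank_tr; exact: fr.
set g := fullrankfun rf.
exists f, g.
have hr := mxrank_fullrowsub rf.
have u : rowsub g (rowsub f AQ)^T \in unitmx.
  by rewrite -row_free_unit /row_free hr.
have e : rowsub g (rowsub f AQ)^T = (map_mx (intr : int -> rat) (mxsub f g A))^T.
  by apply/matrixP => a b; rewrite !mxE.
move: u; rewrite e unitmxE det_tr det_map_mx unitfE intr_eq0.
done.
Qed.

Lemma lift_lemma (N M : nat) (A : 'M[int]_(N, M)) : exists P0 : nat,
  forall p, prime p -> (P0 < p)%N -> forall v : 'rV['F_p]_N,
    v *m map_mx (intr : int -> 'F_p) A = 0 ->
    exists w : 'rV[int]_N, w *m A = 0 /\ map_mx (intr : int -> 'F_p) w = v.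
Proof.
set AQ := map_mx (intr : int -> rat) A.
have [fA [gA hA]] := minor_exists A.
set KQ := kermx AQ.
have [dd nzd [W hW]] := clear_den (fun ij : 'I_N * 'I_N => KQ ij.1 ij.2).
pose WM : 'M[int]_N := \matrix_(i, j) W (i, j).
have eW : map_mx (intr : int -> rat) WM = dd%:~R *: KQ.
  by apply/matrixP => i j; rewrite [LHS]mxE [WM i j]mxE hW [RHS]mxE.
have WA : WM *m A = 0.
  have inj : forall X Y : 'M[int]_(N, M), map_mx (intr : int -> rat) X = map_mx intr Y -> X = Y.
    move=> X Y e; apply/matrixP => i j; have := congr1 (fun Z : 'M[rat]_(N, M) => Z i j) e; rewrite !mxE.
    exact: intr_inj.
  by apply: inj; rewrite map_mxM eW -scalemxAl mulmx_ker scaler0 map_mx0.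
have rW : \rank (map_mx (intr : int -> rat) WM) = (N - \rank AQ)%N.
  have nzdQ : (dd%:~R : rat) != 0 by rewrite intr_eq0.
  by rewrite eW (eqmx_scale _ nzdQ) mxrank_ker.
have [fB [gB hB]] := minor_exists WM.
exists (maxn `|\det (mxsub fA gA A)| `|\det (mxsub fB gB WM)|) => p pp.
rewrite gtn_max => /andP [lA lB] v hv.
set Ap := map_mx (intr : int -> 'F_p) A; set Bp := map_mx (intr : int -> 'F_p) WM.
have rA : (\rank AQ <= \rank Ap)%N.
  have u : mxsub fA gA Ap \in unitmx.
    have -> : mxsub fA gA Ap = map_mx (intr : int -> 'F_p) (mxsub fA gA A).
      by apply/matrixP => a b; rewrite !mxE.
    by rewrite unitmxE det_map_mx unitfE int_Fp_neq0.
  by rewrite -{1}(mxrank_unit u); apply: mxsub_rank.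
have rB : ((N - \rank AQ) <= \rank Bp)%N.
  have u : mxsub fB gB Bp \in unitmx.
    have -> : mxsub fB gB Bp = map_mx (intr : int -> 'F_p) (mxsub fB gB WM).
      by apply/matrixP => a b; rewrite !mxE.
    by rewrite unitmxE det_map_mx unitfE int_Fp_neq0.
  by rewrite -rW -{1}(mxrank_unit u); apply: mxsub_rank.
have BA : Bp *m Ap = 0 by rewrite /Bp /Ap -map_mxM WA map_mx0.
have sBK : (Bp <= kermx Ap)%MS by rewrite sub_kermx BA.
have eBK : (Bp == kermx Ap)%MS.
  have := mxrank_leqif_eq sBK; rewrite mxrank_ker => -[_ <-].
  have h1 := mxrankS sBK; rewrite mxrank_ker in h1.
  apply/eqP; apply: anti_leq; rewrite h1 /=.
  move: rA rB h1; move: (\rank AQ) (\rank Ap) (\rank Bp) => a b c; lia.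
have : (v <= Bp)%MS.
  by rewrite (eqmxP eBK) sub_kermx hv.
case/submxP => u eu.
pose uZ : 'rV[int]_N := \row_j ((u 0 j : nat)%:Z).
exists (uZ *m WM); split; first by rewrite -mulmxA WA mulmx0.
rewrite map_mxM eu; congr (_ *m _); apply/matrixP => i j; rewrite !mxE.
by rewrite ord1; apply: (Fp_natr _ pp).
Qed.

End LinAlgZ.
Import LinAlgZ.


Definition bnd (d : nat) := d.+2.
Definition Bnd (n : nat) (m : 'I_n -> nat) (d : nat) := (bnd d + 2 * (\sum_i m i) + 1)%N.
Definition HA (l d : nat) : {pred 'X_{1..l < bnd d}} := fun mu => mdeg mu == d.
Notation Md l d := {x : 'X_{1..l < bnd d} | x \in @HA l d}.
Notation Tt l n d := (('I_l * Md l d) + ('I_n * 'X_{1..l < bnd d}))%type.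
Notation Ut l n m d := ('I_n * 'X_{1..l < @Bnd n m d})%type.

Section Enc.
Variables (l n : nat) (alpha : 'I_n -> 'I_l -> int) (m : 'I_n -> nat) (d : nat).
Local Notation T := (Tt l n d).
Local Notation U := (Ut l n m d).

Definition delt (R : comRingType) (v : T -> R) : 'I_l -> {mpoly R[l]} :=
  fun j => \sum_(mu : Md l d) v (inl (j, mu)) *: 'X_[val (val mu)].
Definition qq (R : comRingType) (v : T -> R) (i : 'I_n) : {mpoly R[l]} :=
  \sum_(nu : 'X_{1..l < bnd d}) v (inr (i, nu)) *: 'X_[val nu].
Definition LR (R : comRingType) (i : 'I_n) : {mpoly R[l]} :=
  \sum_j ((alpha i j)%:~R : R) *: 'X_j.
Definition EqP (R : comRingType) (v : T -> R) (i : 'I_n) : {mpoly R[l]} :=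
  \sum_j ((alpha i j)%:~R : R) *: delt v j - qq v i * LR R i ^+ m i.
Definition ev (R : comRingType) (t : T) : T -> R := fun s => (s == t)%:R.
Definition acoef (t : T) (u : U) : int := (EqP (ev int t) u.1)@_(val u.2).

Lemma map_intrZ (R : comRingType) (k : nat) (c : int) (p : {mpoly int[k]}) :
  map_mpoly (intr : int -> R) (c *: p) = (c%:~R) *: map_mpoly intr p.
Proof. by rewrite map_mpolyZ. Qed.

Section Generic.
Variable R : comRingType.

Lemma delt_ext (v1 v2 : T -> R) : v1 =1 v2 -> forall j, delt v1 j = delt v2 j.
Proof. by move=> h j; apply: eq_bigr => mu _; rewrite h. Qed.

Lemma EqP_ext (v1 v2 : T -> R) : v1 =1 v2 -> forall i, EqP v1 i = EqP v2 i.
Proof.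
move=> h i; rewrite /EqP /qq; congr (_ - _ * _).
  by apply: eq_bigr => j _; rewrite (delt_ext h).
by apply: eq_bigr => nu _; rewrite h.
Qed.

Lemma sum_ev (v : T -> R) s : \sum_t v t * ev R t s = v s.
Proof.
rewrite (bigD1 s) //= big1 ?addr0; first by rewrite /ev eqxx mulr1.
by move=> t /negbTE ts; rewrite /ev eq_sym ts mulr0.
Qed.

Lemma delt_lin (v : T -> R) j : delt v j = \sum_t v t *: delt (ev R t) j.
Proof.
rewrite /delt; under [RHS]eq_bigr => t _ do rewrite scaler_sumr.
rewrite exchange_big /=; apply: eq_bigr => mu _.
under eq_bigr => t _ do rewrite scalerA.
by rewrite -scaler_suml sum_ev.
Qed.

Lemma qq_lin (v : T -> R) i : qq v i = \sum_t v t *: qq (ev R t) i.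
Proof.
rewrite /qq; under [RHS]eq_bigr => t _ do rewrite scaler_sumr.
rewrite exchange_big /=; apply: eq_bigr => nu _.
under eq_bigr => t _ do rewrite scalerA.
by rewrite -scaler_suml sum_ev.
Qed.

Lemma EqP_lin (v : T -> R) i : EqP v i = \sum_t v t *: EqP (ev R t) i.
Proof.
rewrite /EqP; under [RHS]eq_bigr => t _ do rewrite scalerBr.
rewrite sumrB; congr (_ - _).
  under eq_bigr => j _ do rewrite delt_lin scaler_sumr.
  rewrite exchange_big /=; apply: eq_bigr => t _; rewrite scaler_sumr.
  by apply: eq_bigr => j _; rewrite !scalerA mulrC.
rewrite qq_lin mulr_suml; apply: eq_bigr => t _; by rewrite scalerAl.
Qed.

Lemma EqP_scale (c : R) (v : T -> R) i : EqP (fun t => c * v t) i = c *: EqP v i.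
Proof.
rewrite EqP_lin [in RHS]EqP_lin scaler_sumr; apply: eq_bigr => t _.
by rewrite scalerA.
Qed.

Lemma delt_map (w : T -> int) j :
  map_mpoly (intr : int -> R) (delt w j) = delt (fun t => (w t)%:~R : R) j.
Proof. rewrite /delt rmorph_sum; apply: eq_bigr => mu _. apply: (etrans (map_intrZ _ _ _)). by rewrite map_mpolyX. Qed.

Lemma LR_map i : map_mpoly (intr : int -> R) (LR int i) = LR R i.
Proof.
rewrite /LR rmorph_sum; apply: eq_bigr => j _.
by apply: (etrans (map_intrZ _ _ _)); rewrite map_mpolyX intz.
Qed.

Lemma EqP_map (w : T -> int) i :
  map_mpoly (intr : int -> R) (EqP w i) = EqP (fun t => (w t)%:~R : R) i.
Proof.
rewrite /EqP rmorphB rmorphM rmorphXn /=; congr (_ - _ * _ ^+ _).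
- rewrite rmorph_sum; apply: eq_bigr => j _.
  by apply: (etrans (map_intrZ _ _ _)); rewrite intz delt_map.
- rewrite /qq rmorph_sum; apply: eq_bigr => nu _.
  by apply: (etrans (map_intrZ _ _ _)); rewrite map_mpolyX.
- exact: LR_map.
Qed.

Lemma coef_formula (v : T -> R) i (mu : 'X_{1..l}) :
  (EqP v i)@_mu = \sum_t v t * ((EqP (ev int t) i)@_mu)%:~R.
Proof.
rewrite EqP_lin raddf_sum; apply: eq_bigr => t _; rewrite /= mcoeffZ; congr (_ * _).
rewrite -mcoeff_map_mpoly EqP_map; congr (_@_mu); apply: EqP_ext => s.
by rewrite /ev rmorph_nat.
Qed.

End Generic.

Section Field.
Variable K : fieldType.
Local Notation P := {mpoly K[l]}.

Definition kerK (v : T -> K) := forall i, EqP v i = 0.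

Lemma msize_sum_le (I : Type) (r : seq I) (p : pred I) (F : I -> P) k :
  (forall x, p x -> (msize (F x) <= k)%N) -> (msize (\sum_(x <- r | p x) F x) <= k)%N.
Proof.
move=> h; apply: (big_ind (fun y : P => msize y <= k)%N) => //; first by rewrite msize0.
by move=> x y hx hy; apply: leq_trans (msizeD_le _ _) _; rewrite geq_max hx hy.
Qed.

Lemma msizeMle (p q : P) : (msize (p * q) <= msize p + msize q)%N.
Proof.
have [->|nzp] := eqVneq p 0; first by rewrite mul0r msize0.
have [->|nzq] := eqVneq q 0; first by rewrite mulr0 msize0.
by rewrite msizeM // leq_pred.
Qed.

Lemma msizeB_le (p q : P) : (msize (p - q) <= maxn (msize p) (msize q))%N.
Proof. by apply: leq_trans (msizeD_le _ _) _; rewrite msizeN. Qed.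

Lemma msize_LRX i k : (msize (LR K i ^+ k) <= 2 * k + 1)%N.
Proof.
elim: k => [|k ih]; first by rewrite expr0 msize1.
rewrite exprS; apply: leq_trans (msizeMle _ _) _.
have : (msize (LR K i) <= 2)%N.
  apply: msize_sum_le => j _; apply: leq_trans (msizeZ_le _ _) _.
  by rewrite msizeX mdeg1.
move: ih; move: (msize (LR K i)) (msize (LR K i ^+ k)) => a c; lia.
Qed.

Lemma msizeXb (b : nat) (mu : 'X_{1..l < b}) : (msize ('X_[val mu] : P) <= b)%N.
Proof. by rewrite msizeX; apply: bmdeg. Qed.

Lemma msize_EqP (v : T -> K) i : (msize (EqP v i) <= Bnd m d)%N.
Proof.
have hd : forall j, (msize (delt v j) <= bnd d)%N.
  move=> j; apply: msize_sum_le => mu _; apply: leq_trans (msizeZ_le _ _) _.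
  exact: (msizeXb (val mu)).
have hq : (msize (qq v i) <= bnd d)%N.
  apply: msize_sum_le => mu _; apply: leq_trans (msizeZ_le _ _) _.
  exact: msizeXb.
have hmi : (m i <= \sum_i m i)%N by rewrite (bigD1 i) //= leq_addr.
apply: leq_trans (msizeB_le _ _) _; rewrite geq_max; apply/andP; split.
  apply: msize_sum_le => j _; apply: leq_trans (msizeZ_le _ _) _.
  by apply: leq_trans (hd j) _; rewrite /Bnd -addnA leq_addr.
apply: leq_trans (msizeMle _ _) _.
have := msize_LRX i (m i); rewrite /Bnd.
move: hq hmi; move: (msize (qq v i)) (msize (LR K i ^+ m i)) (\sum_i m i)%N (bnd d) => a c e f; lia.
Qed.

Definition amat : 'M[int]_(#|{: T}|, #|{: U}|) := \matrix_(a, c) acoef (enum_val a) (enum_val c).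

Lemma sum_enum (F : T -> K) : \sum_(a : 'I_#|{: T}|) F (enum_val a) = \sum_t F t.
Proof.
rewrite [RHS](reindex (fun a : 'I_#|{: T}| => enum_val a)) //.
by apply: onW_bij; apply: enum_val_bij.
Qed.

Lemma amat_entry (v : T -> K) c :
  ((\row_a v (enum_val a)) *m map_mx (intr : int -> K) amat) 0 c =
  (EqP v (enum_val c).1)@_(val (enum_val c).2).
Proof.
rewrite coef_formula mxE -sum_enum; apply: eq_bigr => a _; rewrite !mxE.
by [].
Qed.

Lemma ker_mat (v : T -> K) :
  kerK v <-> (\row_a v (enum_val a)) *m map_mx (intr : int -> K) amat = 0.
Proof.
split.
  move=> h; apply/matrixP => r c; rewrite ord1 amat_entry h mcoeff0 mxE.
  by [].
move=> h i; rewrite (mpolywE (msize_EqP v i)); apply: big1 => mu _.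
have := congr1 (fun X : 'rV[K]_#|{: U}| => X 0 (enum_rank ((i, mu) : U))) h.
by rewrite amat_entry enum_rankK mxE /= => ->; rewrite scale0r.
Qed.

Lemma delt_homog (v : T -> K) j : delt v j \is d.-homog.
Proof.
apply: rpred_sum => mu _; apply: dhomogZ; rewrite dhomogX.
by have := valP mu.
Qed.

Lemma ker_inD (v : T -> K) : kerK v -> in_D (fun i => red_form K (alpha i)) m (delt v).
Proof. by move=> h i; exists (qq v i); apply/eqP; rewrite -subr_eq0; apply/eqP; apply: h. Qed.

Lemma homog_msize_le (p : P) e : p \is e.-homog -> (msize p <= e.+1)%N.
Proof.
have [->|nz] := eqVneq p 0; first by rewrite msize0.
by move=> h; rewrite (hmsize nz h).
Qed.

Lemma repr_deriv (delta : derivation K l) :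
  (forall i, exists j, red_form K (alpha i) j != 0) ->
  (forall j, delta j \is d.-homog) -> in_D (fun i => red_form K (alpha i)) m delta ->
  exists v : T -> K, kerK v /\ forall j, delt v j = delta j.
Proof.
move=> Hnz hh hD.
have [q hq] := fin_all_exists hD.
have hqs : forall i, (msize (q i) <= bnd d)%N.
  move=> i; have [->|nzq] := eqVneq (q i) 0; first by rewrite msize0.
  have nzL : linform (red_form K (alpha i)) ^+ m i != 0.
    by apply: expf_neq0; have [j nz] := Hnz i; apply: linform_neq0 nz.
  have h1 := msizeM nzq nzL; rewrite -hq in h1.
  have h2 : (msize (apply_lin delta (red_form K (alpha i))) <= d.+1)%N.
    apply: msize_sum_le => j _; apply: leq_trans (msizeZ_le _ _) _.
    exact: homog_msize_le.
  have h3 : (0 < msize (linform (red_form K (alpha i)) ^+ m i))%N.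
    by rewrite lt0n msize_poly_eq0.
  rewrite /bnd; move: h1 h2 h3.
  move: (msize (q i)) (msize (linform (red_form K (alpha i)) ^+ m i)) (msize (apply_lin delta (red_form K (alpha i)))) => a c e; lia.
pose v (t : T) : K := match t with
  | inl (j, mu) => (delta j)@_(val (val mu))
  | inr (i, nu) => (q i)@_(val nu) end.
have ed : forall j, delt v j = delta j.
  move=> j; rewrite [RHS](mpolywE (k := bnd d)); last first.
    by apply: leq_trans (homog_msize_le (hh j)) _; rewrite /bnd.
  rewrite (bigID (mem (@HA l d))) /= [X in _ + X]big1 ?addr0; last first.
    move=> mu hmu; have hne : mdeg mu != d by [].
    by rewrite (dhomog_nemf_coeff (hh j) hne) scale0r.
  by rewrite big_sub.
have eq : forall i, qq v i = q i.
  by move=> i; rewrite [RHS](mpolywE (k := bnd d)) //.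
exists v; split => // i; rewrite /EqP.
under eq_bigr => j _ do rewrite ed.
by rewrite eq -hq subrr.
Qed.

End Field.

Definition kerZ (w : T -> int) := forall i, EqP w i = 0.

Lemma kerZ_K (K : fieldType) (w : T -> int) : kerZ w -> kerK (fun t => (w t)%:~R : K).
Proof. by move=> h i; rewrite -EqP_map h raddf0. Qed.

Lemma map_intr_inj (p : {mpoly int[l]}) : map_mpoly (intr : int -> rat) p = 0 -> p = 0.
Proof.
move=> h; apply/mpolyP => mu; have := congr1 (mcoeff mu) h.
by rewrite mcoeff_map_mpoly !mcoeff0 => /eqP; rewrite intr_eq0 => /eqP.
Qed.

Lemma kerQ_Z (w : T -> int) : kerK (fun t => (w t)%:~R : rat) -> kerZ w.
Proof. by move=> h i; apply: map_intr_inj; rewrite EqP_map h. Qed.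

Lemma lift_fun : exists P0 : nat, forall p, prime p -> (P0 < p)%N ->
  forall v : T -> 'F_p, kerK v -> exists w : T -> int, kerZ w /\ forall t, (w t)%:~R = v t.
Proof.
have [P0 hP] := lift_lemma amat; exists P0 => p pp lp v hv.
have [wr [hw0 hw1]] := hP p pp lp _ (proj1 (ker_mat v) hv).
exists (fun t => wr 0 (enum_rank t)); split; last first.
  move=> t; have := congr1 (fun X : 'rV['F_p]_#|{: T}| => X 0 (enum_rank t)) hw1.
  by rewrite !mxE enum_rankK.
apply: kerQ_Z; apply/ker_mat.
have -> : (\row_a ((wr 0 (enum_rank (enum_val a)))%:~R : rat)) = map_mx (intr : int -> rat) wr.
  by apply/matrixP => r a; rewrite !mxE enum_valK ord1.
by rewrite -map_mxM hw0 map_mx0.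
Qed.

Lemma scale_fun (v : T -> rat) : kerK v ->
  exists2 dd : int, dd != 0 & exists w : T -> int, kerZ w /\ forall t, (w t)%:~R = dd%:~R * v t.
Proof.
move=> hv; have [dd nzd [w hw]] := clear_den v.
exists dd => //; exists w; split => //.
apply: kerQ_Z => i; rewrite (EqP_ext (v2 := fun t => dd%:~R * v t)) // EqP_scale hv scaler0.
by [].
Qed.

End Enc.


Section Transfer.
Variables (l n : nat) (alpha : 'I_n -> 'I_l -> int) (m : 'I_n -> nat).

Definition QZ : {mpoly int[l]} := \prod_(i < n) LR alpha int i ^+ m i.

Lemma QZ_map (K : fieldType) :
  map_mpoly (intr : int -> K) QZ = Qp (fun i => red_form K (alpha i)) m.
Proof.
rewrite /QZ rmorph_prod; apply: eq_bigr => i _; rewrite rmorphXn /= LR_map.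
by [].
Qed.

Lemma detZ_map (K : fieldType) (e : 'I_l -> nat) (w : forall k, Tt l n (e k) -> int) :
  \det (dmat (fun k j => delt (fun t => ((w k t)%:~R : K)) j)) =
  map_mpoly (intr : int -> K) (\det (\matrix_(k, j) delt (w k) j)).
Proof.
rewrite -det_map_mx; congr (\det _); apply/matrixP => k j.
by rewrite dmatE !mxE; symmetry; exact: delt_map.
Qed.

Lemma delt_scale (K : fieldType) d (c : K) (v : Tt l n d -> K) j :
  delt (fun t => c * v t) j = c *: delt v j.
Proof. by rewrite /delt scaler_sumr; apply: eq_bigr => mu _; rewrite scalerA. Qed.

Lemma det_scale_rows (K : fieldType) (c : 'I_l -> K) (th : 'I_l -> derivation K l) :
  \det (dmat (fun k j => c k *: th k j)) = (\prod_k c k) *: \det (dmat th).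
Proof.
have -> : dmat (fun k j => c k *: th k j) = diag_mx (\row_k (c k)%:MP) *m dmat th.
  by apply/matrixP => k j; rewrite mul_diag_mx [RHS]mxE !dmatE mxE mul_mpolyC.
rewrite det_mulmx det_diag -mul_mpolyC rmorph_prod; congr (_ * _).
by apply: eq_bigr => k _; rewrite mxE.
Qed.

End Transfer.

Lemma map_eqZ (K : fieldType) (k : nat) (a b : int) (P1 P2 : {mpoly int[k]}) :
  a *: P1 = b *: P2 -> a%:~R *: map_mpoly (intr : int -> K) P1 = b%:~R *: map_mpoly intr P2.
Proof. by move=> h; rewrite -!map_intrZ h. Qed.

Lemma scale_solve (K : fieldType) (V : lmodType K) (a b : K) (x y : V) :
  a != 0 -> a *: x = b *: y -> x = (b / a) *: y.
Proof. by move=> nz h; rewrite mulrC -scalerA -h scalerA mulVf // scale1r. Qed.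

Section Dirs.
Variables (l n : nat) (alpha : 'I_n -> 'I_l -> int) (m : 'I_n -> nat) (e : 'I_l -> nat).
Hypothesis HnzQ : forall i, exists j, red_form rat (alpha i) j != 0.
Hypothesis HdistQ : forall i i', i != i' ->
  ~ exists c : rat, forall j, red_form rat (alpha i) j = c * red_form rat (alpha i') j.
Hypothesis Hnzp : forall p, prime p -> forall i, exists j, red_form 'F_p (alpha i) j != 0.
Variable Nd : nat.
Hypothesis Hdistp : forall p, prime p -> (Nd < p)%N -> forall i i', i != i' ->
  ~ exists c : 'F_p, forall j, red_form 'F_p (alpha i) j = c * red_form 'F_p (alpha i') j.

Lemma dirA : free_multiarr (fun i => red_form rat (alpha i)) m e ->
  exists N, forall p, prime p -> (N < p)%N -> free_multiarr (fun i => red_form 'F_p (alpha i)) m e.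
Proof.
case=> th [hD [hH [hG hI]]].
have [cQ nzc hdet] := saito_onlyif HnzQ HdistQ hD hG.
have hv : forall k, exists v : Tt l n (e k) -> rat, kerK alpha m v /\ forall j, delt v j = th k j.
  by move=> k; apply: repr_deriv; [exact: HnzQ | exact: hH | exact: hD].
have [v hv'] := fin_all_exists hv.
have hw : forall k, exists2 dd : int, dd != 0 & exists w : Tt l n (e k) -> int,
    kerZ alpha m w /\ forall t, (w t)%:~R = dd%:~R * v k t.
  by move=> k; apply: scale_fun; exact: (hv' k).1.
have [dd nzdd hw'] := fin_all_exists2 hw.
have [w hw''] := fin_all_exists hw'.
set MZ := \matrix_(k, j) delt (w k) j.
pose c : rat := (\prod_k (dd k)%:~R) * cQ.
have nzc' : c != 0.
  rewrite mulf_eq0 negb_or nzc andbT; apply/prodf_neq0 => k _.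
  by rewrite intr_eq0.
have eQ : map_mpoly (intr : int -> rat) (\det MZ) = c *: map_mpoly (intr : int -> rat) (QZ alpha m).
  rewrite -detZ_map QZ_map.
  have -> : dmat (fun k j => delt (fun t => ((w k t)%:~R : rat)) j) =
            dmat (fun k j => (dd k)%:~R *: th k j).
    apply/matrixP => k j; rewrite !dmatE -(hv' k).2 -delt_scale.
    by apply: delt_ext => t; rewrite (hw'' k).2.
  by rewrite det_scale_rows hdet scalerA.
have eZ : (denq c) *: \det MZ = (numq c) *: QZ alpha m.
  apply/eqP; rewrite -subr_eq0; apply/eqP; apply: map_intr_inj.
  rewrite rmorphB /= map_intrZ map_intrZ eQ scalerA numqE.
  by rewrite mulrC subrr.
exists (maxn Nd (maxn `|numq c| `|denq c|)) => p pp; rewrite !gtn_max => /andP [lN /andP [ln ld]].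
have nzn : ((numq c)%:~R : 'F_p) != 0 by apply: int_Fp_neq0 => //; rewrite numq_eq0.
have nzd : ((denq c)%:~R : 'F_p) != 0 by apply: int_Fp_neq0 => //; rewrite denq_eq0.
pose thp k j := delt (fun t => ((w k t)%:~R : 'F_p)) j.
have hDp : forall k, in_D (fun i => red_form 'F_p (alpha i)) m (thp k).
  by move=> k; apply: ker_inD; apply: kerZ_K; exact: (hw'' k).1.
have hdetp : \det (dmat thp) = ((numq c)%:~R / (denq c)%:~R) *: Qp (fun i => red_form 'F_p (alpha i)) m.
  rewrite detZ_map -QZ_map.
  exact: (scale_solve nzd (map_eqZ _ eZ)).
have nzq : (numq c)%:~R / (denq c)%:~R != 0 :> 'F_p by rewrite mulf_eq0 invr_eq0 negb_or nzn nzd.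
have [hGp hIp] := saito_if (Hnzp pp) (Hdistp pp lN) hDp nzq hdetp.
exists thp; split => //; split => //.
by move=> k j; apply: delt_homog.
Qed.

Lemma dirB : exists N, forall p, prime p -> (N < p)%N ->
  free_multiarr (fun i => red_form 'F_p (alpha i)) m e ->
  free_multiarr (fun i => red_form rat (alpha i)) m e.
Proof.
have hP : forall k : 'I_l, exists P0 : nat, forall p, prime p -> (P0 < p)%N ->
    forall v : Tt l n (e k) -> 'F_p, kerK alpha m v ->
    exists w : Tt l n (e k) -> int, kerZ alpha m w /\ forall t, (w t)%:~R = v t.
  by move=> k; apply: lift_fun.
have [P0 hP0] := fin_all_exists hP.
exists (maxn Nd (\max_k P0 k)) => p pp; rewrite gtn_max => /andP [lN lP].
case=> th [hD [hH [hG hI]]].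
have [cp nzc hdet] := saito_onlyif (Hnzp pp) (Hdistp pp lN) hD hG.
have hv : forall k, exists v : Tt l n (e k) -> 'F_p, kerK alpha m v /\ forall j, delt v j = th k j.
  by move=> k; apply: repr_deriv; [exact: Hnzp | exact: hH | exact: hD].
have [v hv'] := fin_all_exists hv.
have hw : forall k, exists w : Tt l n (e k) -> int, kerZ alpha m w /\ forall t, (w t)%:~R = v k t.
  move=> k; apply: (hP0 k p pp); last exact: (hv' k).1.
  by apply: leq_ltn_trans lP; apply: (leq_bigmax k).
have [w hw'] := fin_all_exists hw.
set MZ := \matrix_(k, j) delt (w k) j.
have ep : map_mpoly (intr : int -> 'F_p) (\det MZ) = cp *: Qp (fun i => red_form 'F_p (alpha i)) m.
  rewrite -detZ_map -hdet; congr (\det _); apply/matrixP => k j; rewrite !dmatE -(hv' k).2.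
  by apply: delt_ext => t; rewrite (hw' k).2.
have nzQp : Qp (fun i => red_form 'F_p (alpha i)) m != 0 by apply: Q_neq0; exact: Hnzp.
have nzMZ : \det MZ != 0.
  apply/eqP => h0; move: ep; rewrite h0 raddf0 => /esym/eqP.
  by rewrite scaler_eq0 (negbTE nzc) (negbTE nzQp).
pose thQ k j := delt (fun t => ((w k t)%:~R : rat)) j.
have hDQ : forall k, in_D (fun i => red_form rat (alpha i)) m (thQ k).
  by move=> k; apply: ker_inD; apply: kerZ_K; exact: (hw' k).1.
have hHQ : forall k, homog_deriv (e k) (thQ k) by move=> k j; apply: delt_homog.
have dQ : \det (dmat thQ) = map_mpoly (intr : int -> rat) (\det MZ) by apply: detZ_map.
have nzdQ : \det (dmat thQ) != 0.
  by rewrite dQ; apply/eqP => /map_intr_inj h0; rewrite h0 eqxx in nzMZ.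
have hom := det_homog hHQ.
have deq := deg_eqQ (Hnzp pp) nzc hdet (det_homog hH).
rewrite deq in hom.
have [c nzc' hdetQ] := homog_eqQ HnzQ nzdQ hom (det_dvd HnzQ HdistQ hDQ).
have [hGQ hIQ] := saito_if HnzQ HdistQ hDQ nzc' hdetQ.
by exists thQ.
Qed.

End Dirs.


Theorem corollary4p7 (l n : nat) (alpha : 'I_n -> 'I_l -> int)
  (m : 'I_n -> nat)
  (* no prime number divides any alpha_i (i.e. divides all its coefficients) *)
  (Hprim : forall (i : 'I_n) (p : nat), prime p ->
     ~ (forall j : 'I_l, (p%:Z %| alpha i j)%Z))
  (* the hyperplanes H_1, ..., H_n of Q^l are pairwise distinct *)
  (Hdist : forall i i' : 'I_n, i != i' ->
     ~ (exists c : rat, forall j : 'I_l,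
          red_form rat (alpha i) j = c * red_form rat (alpha i') j))
  (e : 'I_l -> nat) :
  exists N : nat, forall p : nat, prime p -> (N <= p)%N ->
    (free_multiarr (fun i => red_form 'F_p (alpha i)) m e <->
     free_multiarr (fun i => red_form rat (alpha i)) m e).
Proof.
have ndiv : forall i p, prime p -> exists j, ~~ (p%:Z %| alpha i j)%Z.
  move=> i p pp; have : ~~ [forall j, (p%:Z %| alpha i j)%Z].
    by apply/negP => /forallP h; exact: (Hprim i p pp h).
  by rewrite negb_forall => /existsP.
have Hnzp : forall p, prime p -> forall i, exists j, red_form 'F_p (alpha i) j != 0.
  move=> p pp i; have [j hj] := ndiv i p pp; exists j.
  by rewrite /red_form int_Fp_eq0.
have nzA : forall i, exists j, alpha i j != 0.
  move=> i; have [j hj] := ndiv i 2%N isT; exists j.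
  by apply: contra hj => /eqP ->; apply: dvdz0.
have HnzQ : forall i, exists j, red_form rat (alpha i) j != 0.
  by move=> i; have [j hj] := nzA i; exists j; rewrite /red_form intr_eq0.
pose minor (x : ('I_n * 'I_n) * ('I_l * 'I_l)) : int :=
  alpha x.1.1 x.2.1 * alpha x.1.2 x.2.2 - alpha x.1.1 x.2.2 * alpha x.1.2 x.2.1.
have hminor : forall i i', i != i' -> exists j j', minor ((i, i'), (j, j')) != 0.
  move=> i i' ne.
  have : [exists x : 'I_l * 'I_l, minor ((i, i'), x) != 0].
    apply: contraT; rewrite negb_exists => /forallP h; exfalso.
    have [j' hj'] := nzA i'.
    have nz : ((alpha i' j')%:~R : rat) != 0 by rewrite intr_eq0.
    apply: (Hdist i i' ne); exists ((alpha i j')%:~R / (alpha i' j')%:~R) => j.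
    have := h (j, j'); rewrite negbK /minor /= subr_eq0 => /eqP e1.
    have e2 : ((alpha i j)%:~R * (alpha i' j')%:~R : rat) = (alpha i j')%:~R * (alpha i' j)%:~R.
      by rewrite -!intrM e1.
    by rewrite /red_form -[LHS](mulfK nz) e2 mulrAC.
  by case/existsP => -[j j'] h; exists j, j'.
pose Nd := (\max_x `|minor x|)%N.
have Hdistp : forall p, prime p -> (Nd < p)%N -> forall i i', i != i' ->
    ~ exists c : 'F_p, forall j, red_form 'F_p (alpha i) j = c * red_form 'F_p (alpha i') j.
  move=> p pp lp i i' ne [c hc].
  have [j [j' hm]] := hminor i i' ne.
  have : ((minor ((i, i'), (j, j')))%:~R : 'F_p) != 0.
    apply: int_Fp_neq0 => //; apply: leq_ltn_trans lp.
    exact: (leq_bigmax ((i, i'), (j, j'))).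
  have key : ((minor ((i, i'), (j, j')))%:~R : 'F_p) = 0.
    rewrite /minor /= rmorphB !rmorphM /=.
    have e1 := hc j; have e2 := hc j'; rewrite /red_form in e1 e2; rewrite e1 e2.
    ring.
  by rewrite key eqxx.
have [NB hB] := dirB m e HnzQ Hdist Hnzp Hdistp.
case: (classic (free_multiarr (fun i => red_form rat (alpha i)) m e)) => [FQ|nFQ].
  have [NA hA] := dirA HnzQ Hdist Hnzp Hdistp FQ.
  by exists NA.+1 => p pp lp; split => // _; exact: hA p pp lp.
exists NB.+1 => p pp lp; split; first exact: hB p pp lp.
by move=> FQ; case: (nFQ FQ).
Qed.
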